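(* Let $(L,\preceq,\bot,\top)$ be a bounded lattice with at least three elements and let $\{K_i\}_{i\in I}$ be a family of blocks of $L$ with $I$ a non-empty index set. If there exists $j\in I$ such that $K_j$ is a complete block and $\bigcup_{i\in I}K_i\subsetneq L$, then $\bigcup_{i\in I}K_i$ is a complete block of $L$.
   Context: For $k\in L$ let ${\uparrow}k=\{x\in L\mid k\preceq x\}$ and ${\downarrow}k=\{x\in L\mid x\preceq k\}$. A block of $L$ is a sublattice $K\subsetneq L$ (a proper subset) such that $K\setminus\{\bot,\top\}\neq\varnothing$ and $({\uparrow}k\cup{\downarrow}k)\setminus\{\bot,\top\}\subseteq K$ for every $k\in K\setminus\{\bot,\top\}$. A block $K$ is complete if $\bot,\top\in K$. *)

(* Defs.v *)
From HB Require Import structures.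
From mathcomp Require Import all_boot all_order.
Set Implicit Arguments. Unset Strict Implicit. Unset Printing Implicit Defensive.
Import Order.TTheory.
Local Open Scope order_scope.

Definition is_sublattice (d : Order.disp_t) (L : latticeType d) (K : L -> Prop) : Prop :=
  forall x y : L, K x -> K y -> K (x `&` y) /\ K (x `|` y).

Definition is_block (d : Order.disp_t) (L : tbLatticeType d) (K : L -> Prop) : Prop :=
  [/\ is_sublattice K,
      (exists x : L, ~ K x),
      (exists k : L, [/\ K k, k <> \bot & k <> \top])
    & forall k : L, K k -> k <> \bot -> k <> \top ->
        forall x : L, (k <= x \/ x <= k) -> x <> \bot -> x <> \top -> K x].

Definition is_complete_block (d : Order.disp_t) (L : tbLatticeType d) (K : L -> Prop) : Prop :=
  [/\ is_block K, K \bot & K \top].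

(* Main.v *)
Require Import Defs.
From HB Require Import structures.
From mathcomp Require Import all_boot all_order.
Import Order.TTheory.
Local Open Scope order_scope.

Theorem proposition17 (d : Order.disp_t) (L : tbLatticeType d)
  (three : exists a b c : L, [/\ a <> b, a <> c & b <> c])
  (I : Type) (K : I -> L -> Prop)
  (I_nonempty : inhabited I)
  (Kblocks : forall i : I, is_block (K i))
  (j : I) (Kj_complete : is_complete_block (K j))
  (proper : exists x : L, ~ (exists i : I, K i x)) :
  is_complete_block (fun x : L => exists i : I, K i x).
Proof.
case: Kj_complete => Bj Kjb Kjt.
have Hz : forall (i : I) (x z : L), K i x -> x <> \bot -> x <> \top ->
    (x <= z \/ z <= x) -> exists i, K i z.
  move=> i x z Kx xb xt cmp.
  case: (eqVneq z \bot) => [->|zb]; first by exists j.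
  case: (eqVneq z \top) => [->|zt]; first by exists j.
  exists i; case: (Kblocks i) => _ _ _ H.
  by apply: (H x Kx xb xt z cmp); apply/eqP.
have Hgen : forall x y : L, (exists i, K i x) -> (exists i, K i y) ->
    (exists i, K i (x `&` y)) /\ (exists i, K i (x `|` y)).
  move=> x y [a Kx] [b Ky].
  case: (eqVneq x \bot) => [->|xb].
    by rewrite meet0x join0x; split; [exists j | exists b].
  case: (eqVneq x \top) => [->|xt].
    by rewrite meet1x join1x; split; [exists b | exists j].
  split.
  - apply: (Hz a x) => //; [exact/eqP | exact/eqP | right; exact: leIl].
  - apply: (Hz a x) => //; [exact/eqP | exact/eqP | left; exact: leUl].
split => //; last by exists j.
split => //.
- case: Bj => _ _ [k [Kk kb kt]] _; exists k; split => //; by exists j.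
- move=> k [i Kk] kb kt x cmp xb xt.
  case: (Kblocks i) => _ _ _ H; exists i; exact: (H k Kk kb kt x cmp xb xt).
by exists j.
Qed.
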